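(* Let $P\in\mathbb{C}[y]$ with $\deg P\geq 2$, $\delta\in\mathbb{C}\setminus\{0\}$, $h_1(x,y)=(y,P(y)-\delta x)$, $\theta\in(0,2\pi)\setminus\{\frac{\pi}{2},\pi,\frac{3\pi}{2}\}$, $R_\theta$ the linear map of $\mathbb{C}^2$ with matrix $\begin{pmatrix}\cos\theta&-\sin\theta\\ \sin\theta&\cos\theta\end{pmatrix}$, and $h_2=R_\theta^{-1}\circ h_1\circ R_\theta$. Then the group $G=\langle h_1,h_2\rangle$ of automorphisms of $\mathbb{C}^2$ is isomorphic to the free group on two generators (freely generated by $h_1,h_2$). *)

(* Defs.v *)
From mathcomp Require Import all_boot all_algebra.
From mathcomp Require Import all_classical all_reals all_analysis.
From mathcomp.real_closed Require Import complex.
Set Implicit Arguments. Unset Strict Implicit. Unset Printing Implicit Defensive.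
Import GRing.Theory Num.Theory.
Local Open Scope ring_scope.
Local Open Scope complex_scope.

Section Henon.
Variables (R : realType).
Local Notation C := R[i].

Definition henon (P : {poly C}) (delta : C) (z : C * C) : C * C :=
  (z.2, P.[z.2] - delta * z.1).

Definition henon_inv (P : {poly C}) (delta : C) (z : C * C) : C * C :=
  ((P.[z.1] - z.2) / delta, z.1).

Definition rot (theta : R) (z : C * C) : C * C :=
  ((cos theta)%:C * z.1 - (sin theta)%:C * z.2,
   (sin theta)%:C * z.1 + (cos theta)%:C * z.2).

Definition rot_inv (theta : R) (z : C * C) : C * C := rot (- theta) z.

Definition h2 (P : {poly C}) (delta : C) (theta : R) : C * C -> C * C :=
  rot_inv theta \o henon P delta \o rot theta.
Definition h2_inv (P : {poly C}) (delta : C) (theta : R) : C * C -> C * C :=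
  rot_inv theta \o henon_inv P delta \o rot theta.

End Henon.

(* A letter is (generator index, inverted?) : false = f1, true = f2. *)
Definition letter := (bool * bool)%type.

(* A word is reduced if no letter is immediately followed by its inverse. *)
Definition reduced_word (w : seq letter) : bool :=
  sorted (fun a b : letter => ~~ ((a.1 == b.1) && (a.2 != b.2))) w.

Definition freely_generate (T : Type) (f1 f1i f2 f2i : T -> T) : Prop :=
  [/\ cancel f1 f1i, cancel f1i f1, cancel f2 f2i, cancel f2i f2 &
      forall w : seq letter, w != [::] -> reduced_word w ->
        foldr (fun l g => (match l with
                           | (false, false) => f1 | (false, true) => f1i
                           | (true, false) => f2 | (true, true) => f2i end) \o g)
              id w <> id].

(* Main.v *)
Require Import Defs.
From mathcomp Require Import all_boot all_algebra.
From mathcomp Require Import all_classical all_reals all_analysis.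
From mathcomp.real_closed Require Import complex.
Import GRing.Theory Num.Theory.
Local Open Scope ring_scope.
Local Open Scope complex_scope.
From mathcomp Require Import all_order.
Import mathcomp.order.order.Order.TTheory.
From mathcomp Require Import ring lra.

Definition nrm {R : realType} (z : R[i]) : R := Normc.normc z.

Section G.
Context {R : realType}.
Local Notation C := R[i].
Local Notation N := (@nrm R).

Lemma N_ge0 (z : C) : 0 <= N z.
Proof. by rewrite /nrm; case: z => a b; exact: sqrtr_ge0. Qed.

Lemma N_real (r : R) : N r%:C = `|r|.
Proof. by rewrite /nrm /= expr0n /= addr0 sqrtr_sqr. Qed.

Lemma NM (a b : C) : N (a * b) = N a * N b.
Proof. exact: Normc.normcM. Qed.

Lemma NV (a : C) : N (a^-1) = (N a)^-1.
Proof. exact: Normc.normcV. Qed.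

Lemma N0 : N (0 : C) = 0.
Proof. exact: Normc.normc0. Qed.

Lemma ND (a b : C) : N (a + b) <= N a + N b.
Proof. exact: le_normcD. Qed.

Lemma NN (a : C) : N (- a) = N a.
Proof. exact: normcN. Qed.

Lemma NDge (a b : C) : N a - N b <= N (a + b).
Proof.
have := ND (a + b) (- b); rewrite addrK NN => h; lra.
Qed.

Lemma NBge (a b : C) : N a - N b <= N (a - b).
Proof. by have := NDge a (- b); rewrite NN. Qed.

Lemma N_gt0 (a : C) : a != 0 -> 0 < N a.
Proof.
move=> a0; rewrite lt_neqAle N_ge0 andbT; apply/eqP => h.
by move/eqP: a0; apply; apply: Normc.eq0_normc.
Qed.

Lemma growth1 (p : {poly C}) : p != 0 ->
  exists c, 0 < c /\ exists K, forall y, K <= N y -> c <= N p.[y].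
Proof.
elim/poly_ind: p => [|p a IH]; first by rewrite eqxx.
move=> nz.
have [p0|pn0] := eqVneq p 0.
  move: nz; rewrite p0 mul0r add0r polyC_eq0 => a0.
  exists (N a); split; first exact: N_gt0.
  by exists 0 => y _; rewrite hornerC.
have [c [c0 [K HK]]] := IH pn0.
exists c; split => //.
exists (`|K| + (c + N a) / c) => y hy.
rewrite hornerMXaddC.
have hK : K <= N y.
  have : 0 <= (c + N a) / c by rewrite divr_ge0 // ?addr_ge0 ?N_ge0 // ltW.
  have := ler_norm K; lra.
have h1 := HK y hK.
have h2 : c + N a <= N y * c.
  have : (c + N a) / c <= N y by have := normr_ge0 K; lra.
  by rewrite ler_pdivrMr.
have h3 := NDge (p.[y] * y) a; rewrite NM in h3.
have h4 : c * N y <= N p.[y] * N y by have := ler_wpM2r (N_ge0 y) h1.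
have := N_ge0 y; nra.
Qed.

Lemma growth2 (p : {poly C}) : (2 < size p)%N -> forall L, 0 <= L ->
  exists M, 0 < M /\ forall y, M <= N y -> L * N y <= N p.[y].
Proof.
elim/poly_ind: p => [|q a _]; first by rewrite size_poly0.
move=> hs L L0.
have qn0 : q != 0.
  by apply: contraTneq hs => ->; rewrite mul0r add0r size_polyC; case: (a != 0).
move: hs; rewrite size_MXaddC (negbTE qn0) /= ltnS => hs.
move: hs qn0; elim/poly_ind: q => [|q b _]; first by rewrite size_poly0.
move=> hs _.
have qn0 : q != 0.
  by apply: contraTneq hs => ->; rewrite mul0r add0r size_polyC; case: (b != 0).
have [c [c0 [K HK]]] := growth1 _ qn0.
have hpos : 0 <= (N b + L + N a) / c.
  by rewrite divr_ge0 // ?addr_ge0 ?N_ge0 // ltW.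
exists (`|K| + 1 + (N b + L + N a) / c); split.
  have := normr_ge0 K; lra.
move=> y hy; rewrite !hornerMXaddC.
have hK : K <= N y by have := ler_norm K; lra.
have hy1 : 1 <= N y by have := normr_ge0 K; lra.
have h1 := HK y hK.
have h2 : N b + L + N a <= N y * c.
  have : (N b + L + N a) / c <= N y by have := normr_ge0 K; lra.
  by rewrite ler_pdivrMr.
have h3 := NDge (q.[y] * y) b; rewrite NM in h3.
have h4 : c * N y <= N q.[y] * N y by have := ler_wpM2r (N_ge0 y) h1.
set t := N (q.[y] * y + b) in h3 *.
have ht : L + N a <= t by lra.
have h5 := NDge ((q.[y] * y + b) * y) a; rewrite NM -/t in h5.
have h6 : (L + N a) * N y <= t * N y by have := ler_wpM2r (N_ge0 y) ht.
have h7 : N a <= N a * N y by have := ler_wpM2l (N_ge0 a) hy1; rewrite mulr1.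
lra.
Qed.
End G.


Definition rl (a b : letter) : bool := ~~ ((a.1 == b.1) && (a.2 != b.2)).

Definition Fl {T : Type} (f1 f1i f2 f2i : T -> T) (l : letter) : T -> T :=
  match l with
  | (false, false) => f1 | (false, true) => f1i
  | (true, false) => f2 | (true, true) => f2i end.

Lemma pp_word (T : Type) (f1 f1i f2 f2i : T -> T) (S : letter -> T -> Prop) :
  (forall l l' z, rl l l' -> S l' z -> S l (Fl f1 f1i f2 f2i l z)) ->
  forall w l l' z, path rl l w -> rl (last l w) l' -> S l' z ->
    S l (Fl f1 f1i f2 f2i l (foldr (fun l g => Fl f1 f1i f2 f2i l \o g) id w z)).
Proof.
move=> HS; elim=> [|l2 w IH] l l' z /=.
  by move=> _ hr hz; exact: HS hr hz.
move=> /andP[h12 hp] hr hz; apply: HS h12 _.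
exact: IH hp hr hz.
Qed.

Lemma pingpong (T : Type) (f1 f1i f2 f2i : T -> T) (S : letter -> T -> Prop) :
  cancel f1 f1i -> cancel f1i f1 -> cancel f2 f2i -> cancel f2i f2 ->
  (forall l l' z, rl l l' -> S l' z -> S l (Fl f1 f1i f2 f2i l z)) ->
  (forall l l' z, l != l' -> S l z -> S l' z -> False) ->
  (forall l, exists z, S l z) ->
  freely_generate f1 f1i f2 f2i.
Proof.
move=> c1 c2 c3 c4 HS Hd Hn; split => // -[//|l w] _ hred heq.
have [l'' [hne hr]] : exists l'', l'' != l /\ rl (last l w) l''.
  have gen : forall x l0 : letter, exists l'', l'' != l0 /\ rl x l''.
    move=> x l0.
    case: l0 => [[] []]; case: x => [[] []];
    first [by exists (true,true) | by exists (true,false)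
          | by exists (false,true) | by exists (false,false)].
  exact: gen.
have [z hz] := Hn l''.
have := @pp_word _ _ _ _ _ S HS w l l'' z hred hr hz.
have -> : Fl f1 f1i f2 f2i l (foldr (fun l g => Fl f1 f1i f2 f2i l \o g) id w z)
  = foldr (fun l g => (match l with
                           | (false, false) => f1 | (false, true) => f1i
                           | (true, false) => f2 | (true, true) => f2i end) \o g)
              id (l :: w) z by [].
rewrite heq => hz'.
exact: Hd _ _ _ hne hz hz'.
Qed.


Lemma trig_nz (R : realType) (theta : R) :
  0 < theta < 2 * pi ->
  theta != pi / 2 -> theta != pi -> theta != 3 * pi / 2 ->
  cos theta != 0 /\ sin theta != 0.
Proof.
move=> /andP[t0 t2] h1 h2 h3.
have pi0 : 0 < pi :> R := pi_gt0 R.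
split.
- have [lt1|gt1] := ltP theta (pi / 2).
    by apply/lt0r_neq0/cos_gt0_pihalf; apply/andP; split; lra.
  have gt1' : pi / 2 < theta by rewrite lt_neqAle gt1 eq_sym h1.
  have [lt2|gt2] := ltP theta (3 * pi / 2).
    have -> : theta = (theta - pi) + pi by rewrite subrK.
    rewrite cosDpi oppr_eq0; apply/lt0r_neq0/cos_gt0_pihalf; apply/andP; split; lra.
  have gt2' : 3 * pi / 2 < theta by rewrite lt_neqAle gt2 eq_sym h3.
  have -> : theta = (theta - 2 * pi) + pi + pi by lra.
  rewrite !cosDpi opprK; apply/lt0r_neq0/cos_gt0_pihalf; apply/andP; split; lra.
- have [lt1|gt1] := ltP theta pi.
    by apply/lt0r_neq0/sin_gt0_pi; apply/andP; split; lra.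
  have gt1' : pi < theta by rewrite lt_neqAle gt1 eq_sym h2.
  have -> : theta = (theta - pi) + pi by rewrite subrK.
  rewrite sinDpi oppr_eq0; apply/lt0r_neq0/sin_gt0_pi; apply/andP; split; lra.
Qed.


Section Main.
Variable R : realType.
Local Notation C := R[i].
Local Notation N := (@nrm R).
Variables (P : {poly C}) (delta : C) (c s m M L : R).
Hypothesis hd : delta != 0.
Hypothesis m0 : 0 < m.
Hypothesis hc : m <= `|c| <= 1.
Hypothesis hs : m <= `|s| <= 1.
Hypothesis hM : 0 < M.
Hypothesis hL : L * m = 20 + 20 * N delta.
Hypothesis HM : forall y, M <= N y -> L * N y <= N P.[y].

Let K := 2 * M / m.
Lemma hK : m * K = 2 * M.
Proof. by rewrite /K mulrC divfK // gt_eqF. Qed.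
Lemma K0 : 0 <= K.
Proof. by rewrite /K divr_ge0 // ltW // mulr_gt0. Qed.
Lemma m1 : m <= 1.
Proof. by case/andP: hc => h1 h2; apply: le_trans h2. Qed.

Definition Ap (z : C * C) := K < N z.2 /\ N z.1 < m / 8 * N z.2.
Definition Am (z : C * C) := K < N z.1 /\ N z.2 < m / 8 * N z.1.
Definition D1 (z : C * C) := M <= N z.2 /\ m / 4 * N z.1 <= N z.2.
Definition D1' (z : C * C) := M <= N z.1 /\ m / 4 * N z.2 <= N z.1.
Definition rotC (a b : R) (z : C * C) : C * C :=
  (a%:C * z.1 - b%:C * z.2, b%:C * z.1 + a%:C * z.2).

Lemma Nge0M {a x : R} : 0 <= a -> a <= 1 -> 0 <= x -> a * x <= x.
Proof. by move=> *; nra. Qed.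

Lemma lin_bound (a b : R) (w z : C) : `|a| <= 1 -> m <= `|b| <= 1 ->
  N w <= m / 8 * N z ->
  m / 2 * N z <= N (a%:C * w + b%:C * z) /\ N (a%:C * w + b%:C * z) <= 2 * N z.
Proof.
move=> ha /andP[hb1 hb2] hw.
have e1 : N (a%:C * w) = `|a| * N w by rewrite NM N_real.
have e2 : N (b%:C * z) = `|b| * N z by rewrite NM N_real.
have hz := N_ge0 z; have hw0 := N_ge0 w.
have f1 : `|a| * N w <= N w by apply: Nge0M.
have f2 : m * N z <= `|b| * N z by apply: ler_wpM2r.
have f3 : `|b| * N z <= N z by apply: Nge0M => //; apply: le_trans hb1; apply: ltW.
have f4 : m * N z <= N z by apply: Nge0M => //; [apply: ltW|apply: m1].
have g1 := NDge (b%:C * z) (a%:C * w); rewrite [b%:C * z + _]addrC in g1.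
have g2 := ND (a%:C * w) (b%:C * z).
split; lra.
Qed.

Lemma rot_region (a b : R) (z : C * C) : m <= `|a| <= 1 -> m <= `|b| <= 1 ->
  Ap z \/ Am z -> D1 (rotC a b z) /\ D1' (rotC a b z).
Proof.
move=> ha hb; case: z => x y; rewrite /Ap /Am /D1 /D1' /rotC /=.
have ha1 : `|a| <= 1 by case/andP: ha.
have hb1 : `|b| <= 1 by case/andP: hb.
have hbN : m <= `|- b| <= 1 by rewrite normrN.
have hK' := hK.
have hmN : forall t, K < t -> M < m / 2 * t.
  move=> t ht; have : m * K < m * t by rewrite ltr_pM2l.
  lra.
case=> -[hy hx].
- have u1 := lin_bound a (- b) x y ha1 hbN (ltW hx).
  have v1 := lin_bound b a x y hb1 ha (ltW hx).
  rewrite rmorphN mulNr in u1.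
  have u2 := ler_wpM2l (ltW m0) u1.2; have v2 := ler_wpM2l (ltW m0) v1.2.
  have := hmN _ hy; have := N_ge0 y; move=> *; split; split; lra.
- have hbN1 : `|- b| <= 1 by rewrite normrN.
  have u1 := lin_bound (- b) a y x hbN1 ha (ltW hx).
  have v1 := lin_bound a b y x ha1 hb (ltW hx).
  rewrite rmorphN mulNr addrC in u1.
  rewrite addrC in v1.
  have u2 := ler_wpM2l (ltW m0) u1.2; have v2 := ler_wpM2l (ltW m0) v1.2.
  have := hmN _ hy; have := N_ge0 x; move=> *; split; split; lra.
Qed.

Lemma Ap_D1 z : Ap z -> D1 z.
Proof.
case: z => x y; rewrite /Ap /D1 /= => -[hy hx].
have k0 := K0; have hK' := hK; have nx0 := N_ge0 x; have ny0 := N_ge0 y.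
have f := Nge0M (ltW m0) m1 (N_ge0 y).
have f' := Nge0M (ltW m0) m1 (N_ge0 x).
have : M <= K.
  have : m * K <= K by apply: Nge0M (ltW m0) m1 K0.
  lra.
move=> *; split; lra.
Qed.

Lemma Am_D1' z : Am z -> D1' z.
Proof.
case: z => x y; rewrite /Am /D1' /= => -[hy hx].
have k0 := K0; have hK' := hK; have nx0 := N_ge0 x; have ny0 := N_ge0 y.
have f := Nge0M (ltW m0) m1 (N_ge0 y).
have f' := Nge0M (ltW m0) m1 (N_ge0 x).
have : M <= K.
  have : m * K <= K by apply: Nge0M (ltW m0) m1 K0.
  lra.
move=> *; split; lra.
Qed.

Lemma ApAm z : Ap z -> Am z -> False.
Proof.
case: z => x y; rewrite /Ap /Am /= => -[hy hx] [hx' hy'].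
have k0 := K0.
have f := Nge0M (ltW m0) m1 (N_ge0 y).
have f' := Nge0M (ltW m0) m1 (N_ge0 x).
lra.
Qed.

Lemma ApD1' z : Ap z -> D1' z -> False.
Proof.
case: z => x y; rewrite /Ap /D1' /= => -[hy hx] [hx' hy'].
have k0 := K0.
have : 0 < m * N y by apply: mulr_gt0 => //; have := K0; lra.
lra.
Qed.

Lemma AmD1 z : Am z -> D1 z -> False.
Proof.
case: z => x y; rewrite /Am /D1 /= => -[hy hx] [hx' hy'].
have : 0 < m * N x by apply: mulr_gt0 => //; have := K0; lra.
lra.
Qed.

Lemma henon_D1 z : D1 z -> Ap (henon P delta z).
Proof.
case: z => x y; rewrite /D1 /Ap /henon /= => -[hy hx].
have hM' := hM; have m0' := m0.
have h0 := HM y hy.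
have t := NBge P.[y] (delta * x); rewrite NM in t.
set Q := N (P.[y] - delta * x) in t *; clearbody Q.
have d0 := N_ge0 delta.
have h1 : m * (L * N y) = (20 + 20 * N delta) * N y by rewrite mulrA [m * L]mulrC hL.
have h2 := ler_wpM2l (ltW m0) h0.
have h3 := ler_wpM2l (ltW m0) t.
have h4 : N delta * (m * N x) <= N delta * (4 * N y).
  by apply: ler_wpM2l => //; lra.
have h5 : 0 <= N delta * N y by apply: mulr_ge0 => //; apply: N_ge0.
have hmQ : 20 * N y <= m * Q.
  rewrite mulrBr in h3. 
  have e : m * (N delta * N x) = N delta * (m * N x) by rewrite mulrCA.
  lra.
have := hK; move=> hK'.
split.
  have hh : m * K < m * Q by rewrite hK'; lra.
  by rewrite ltr_pM2l in hh.
have : 8 * N y < m * Q by lra.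
rewrite mulrAC ltr_pdivlMr //; lra.
Qed.

Lemma henoninv_D1' z : D1' z -> Am (henon_inv P delta z).
Proof.
case: z => x y; rewrite /D1' /Am /henon_inv /= => -[hx hy].
have hM' := hM; have m0' := m0.
have h0 := HM x hx.
have t := NBge P.[x] y.
have d0 : 0 < N delta by apply: N_gt0.
rewrite NM NV.
set Q := N (P.[x] - y) in t *; clearbody Q.
have h1 : m * (L * N x) = (20 + 20 * N delta) * N x by rewrite mulrA [m * L]mulrC hL.
have h2 := ler_wpM2l (ltW m0) h0.
have h3 := ler_wpM2l (ltW m0) t.
have hmQ : 16 * N x + 20 * (N delta * N x) <= m * Q.
  rewrite mulrBr in h3. lra.
have h5 : M * N delta <= N x * N delta by apply: ler_wpM2r => //; apply: ltW.
have h6 : 0 < M * N delta by apply: mulr_gt0.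
have := hK; move=> hK'.
have hx0 : 0 < N x by lra.
have h7 : 0 < N delta * N x by apply: mulr_gt0.
split.
  have hh : m * (K * N delta) < m * Q.
    have e : m * (K * N delta) = (m * K) * N delta by rewrite mulrA.
    rewrite e hK'; lra.
  rewrite ltr_pM2l // in hh.
  by rewrite ltr_pdivlMr.
have hh : N x * N delta < m / 8 * Q by lra.
by rewrite mulrA ltr_pdivlMr.
Qed.

Variable theta : R.
Hypothesis hct : cos theta = c.
Hypothesis hst : sin theta = s.

Lemma rot_eq z : Defs.rot theta z = rotC c s z.
Proof. by rewrite /Defs.rot hct hst. Qed.

Lemma rotinv_eq z : rot_inv theta z = rotC c (- s) z.
Proof. by rewrite /rot_inv /Defs.rot cosN sinN hct hst. Qed.

Lemma cs1 : c%:C ^+ 2 + s%:C ^+ 2 = 1 :> C.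
Proof. by rewrite -!rmorphXn -rmorphD -hct -hst cos2Dsin2. Qed.

Lemma rotK z : Defs.rot theta (rot_inv theta z) = z.
Proof.
rewrite rot_eq rotinv_eq /rotC /=; case: z => x y /=.
have e := cs1.
congr pair.
  rewrite -[X in _ = X]mul1r -e rmorphN; ring.
rewrite -[X in _ = X]mul1r -e rmorphN; ring.
Qed.

Lemma rot_invK z : rot_inv theta (Defs.rot theta z) = z.
Proof.
rewrite rot_eq rotinv_eq /rotC /=; case: z => x y /=.
have e := cs1.
congr pair.
  rewrite -[X in _ = X]mul1r -e rmorphN; ring.
rewrite -[X in _ = X]mul1r -e rmorphN; ring.
Qed.

Lemma hsN : m <= `|- s| <= 1.
Proof. by rewrite normrN. Qed.

Lemma LB z : Ap (Defs.rot theta z) \/ Am (Defs.rot theta z) -> D1 z /\ D1' z.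
Proof.
move=> H; rewrite -[z]rot_invK rotinv_eq.
exact: rot_region hc hsN H.
Qed.

Lemma LR z : Ap z \/ Am z -> D1 (Defs.rot theta z) /\ D1' (Defs.rot theta z).
Proof. by move=> H; rewrite rot_eq; exact: rot_region hc hs H. Qed.

Definition SS (l : letter) : C * C -> Prop :=
  match l with
  | (false, false) => Ap | (false, true) => Am
  | (true, false) => fun z => Ap (Defs.rot theta z)
  | (true, true) => fun z => Am (Defs.rot theta z) end.

Lemma L1 l z : rl (false, false) l -> SS l z -> D1 z.
Proof.
case: l => [[] []] //= _ H.
- exact: (LB z (or_intror H)).1.
- exact: (LB z (or_introl H)).1.
- exact: Ap_D1 z H.
Qed.

Lemma L2 l z : rl (false, true) l -> SS l z -> D1' z.
Proof.
case: l => [[] []] //= _ H.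
- exact: (LB z (or_intror H)).2.
- exact: (LB z (or_introl H)).2.
- exact: Am_D1' z H.
Qed.

Lemma L3 l z : rl (true, false) l -> SS l z -> D1 (Defs.rot theta z).
Proof.
case: l => [[] []] //= _ H.
- exact: Ap_D1 _ H.
- exact: (LR z (or_intror H)).1.
- exact: (LR z (or_introl H)).1.
Qed.

Lemma L4 l z : rl (true, true) l -> SS l z -> D1' (Defs.rot theta z).
Proof.
case: l => [[] []] //= _ H.
- exact: Am_D1' _ H.
- exact: (LR z (or_intror H)).2.
- exact: (LR z (or_introl H)).2.
Qed.

Lemma Dis l l' z : l != l' -> SS l z -> SS l' z -> False.
Proof.
case: l => [[] []]; case: l' => [[] []] //= _ H1 H2.
- exact: ApAm _ H2 H1.
- exact: AmD1 z H2 (LB z (or_intror H1)).1.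
- exact: ApD1' z H2 (LB z (or_intror H1)).2.
- exact: ApAm _ H1 H2.
- exact: AmD1 z H2 (LB z (or_introl H1)).1.
- exact: ApD1' z H2 (LB z (or_introl H1)).2.
- exact: AmD1 z H1 (LB z (or_intror H2)).1.
- exact: AmD1 z H1 (LB z (or_introl H2)).1.
- exact: ApAm z H2 H1.
- exact: ApD1' z H1 (LB z (or_intror H2)).2.
- exact: ApD1' z H1 (LB z (or_introl H2)).2.
- exact: ApAm z H1 H2.
Qed.

Lemma main_sec :
  freely_generate (henon P delta) (henon_inv P delta)
                  (h2 P delta theta) (h2_inv P delta theta).
Proof.
have c1 : cancel (henon P delta) (henon_inv P delta).
  case=> x y; rewrite /henon /henon_inv /=; congr pair.
  have -> : P.[y] - (P.[y] - delta * x) = delta * x by ring.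
  by rewrite mulrC mulKf.
have c2 : cancel (henon_inv P delta) (henon P delta).
  case=> x y; rewrite /henon /henon_inv /=; congr pair.
  by rewrite [delta * _]mulrC divfK // opprB addrC subrK.
apply: (@pingpong _ _ _ _ _ SS) => //.
- by move=> z; rewrite /h2 /h2_inv /= rotK c1 rot_invK.
- by move=> z; rewrite /h2 /h2_inv /= rotK c2 rot_invK.
- move=> [[] []] l' z hr H; rewrite /h2 /h2_inv /= ?rotK.
  + exact: henoninv_D1' _ (L4 _ _ hr H).
  + exact: henon_D1 _ (L3 _ _ hr H).
  + exact: henoninv_D1' _ (L2 _ _ hr H).
  + exact: henon_D1 _ (L1 _ _ hr H).
- exact: Dis.
- have k0 := K0.
  have hA : Ap (0, (K + 1)%:C).
    rewrite /Ap; change (K < N (K + 1)%:C /\ N (0 : C) < m / 8 * N (K + 1)%:C).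
    rewrite N0 N_real ger0_norm; last lra.
    split; first lra.
    by apply: mulr_gt0; [apply: mulr_gt0|lra].
  have hA' : Am ((K + 1)%:C, 0).
    rewrite /Am; change (K < N (K + 1)%:C /\ N (0 : C) < m / 8 * N (K + 1)%:C).
    rewrite N0 N_real ger0_norm; last lra.
    split; first lra.
    by apply: mulr_gt0; [apply: mulr_gt0|lra].
  move=> [[] []] /=.
  + by exists (rot_inv theta ((K + 1)%:C, 0)); rewrite rotK.
  + by exists (rot_inv theta (0, (K + 1)%:C)); rewrite rotK.
  + by exists ((K + 1)%:C, 0).
  + by exists (0, (K + 1)%:C).
Qed.
End Main.

Theorem mainTheorem2 (R : realType) (P : {poly R[i]}) (delta : R[i]) (theta : R) :
  (2 < size P)%N -> delta != 0 ->
  0 < theta < 2 * pi ->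
  theta != pi / 2 -> theta != pi -> theta != 3 * pi / 2 ->
  freely_generate (henon P delta) (henon_inv P delta)
                  (h2 P delta theta) (h2_inv P delta theta).
Proof.
move=> hP hd hth h1 h2' h3.
have [hc0 hs0] := @trig_nz R theta hth h1 h2' h3.
pose m := Num.min `|cos theta| `|sin theta|.
have m0 : 0 < m by rewrite /m lt_min !normr_gt0 hc0 hs0.
have hc : m <= `|cos theta| <= 1 by rewrite /m ge_min lexx /= cos_max.
have hs : m <= `|sin theta| <= 1 by rewrite /m ge_min lexx orbT /= sin_max.
pose L := (20 + 20 * nrm delta) / m.
have hL : L * m = 20 + 20 * nrm delta by rewrite /L divfK // gt_eqF.
have L0 : 0 <= L.
  rewrite /L; apply: divr_ge0; last exact: ltW.
  have := N_ge0 delta; lra.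
have [M [hM HM]] := growth2 P hP L L0.
exact: (@main_sec R P delta (cos theta) (sin theta) m M L hd m0 hc hs hM hL HM theta erefl erefl).
Qed.
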